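(* Let $\mathbf T$ be a countable homogeneous tournament and $\mathbf T^*$ an expansion of $\mathbf T$ as described in the context, and assume that $\mathrm{Age}(\mathbf T^* )$ has the Ramsey property. Then for every positive integer $n$, the class $\mathrm{Age}(\mathbf T[I_n]^* )$ has the Ramsey property.
   Context: For relational structures $\mathbf A,\mathbf B$ in the same language, $\binom{\mathbf B}{\mathbf A}$ denotes the set of substructures of $\mathbf B$ isomorphic to $\mathbf A$. For $k\ge 1$, $\mathbf C\to(\mathbf B)^{\mathbf A}_k$ means: for every map $c:\binom{\mathbf C}{\mathbf A}\to[k]=\{0,\dots,k-1\}$ there is $\mathbf B'\in\binom{\mathbf C}{\mathbf B}$ such that $c$ is constant on $\binom{\mathbf B'}{\mathbf A}$. A class $\mathcal K$ of finite structures has the Ramsey property if for all $k\ge1$ and all $\mathbf A,\mathbf B\in\mathcal K$ there is $\mathbf C\in\mathcal K$ with $\mathbf C\to(\mathbf B)^{\mathbf A}_k$. The age $\mathrm{Age}(\mathbf F)$ of a structure $\mathbf F$ is the class of finite structures embeddable in $\mathbf F$. A tournament is a directed graph in which every pair of distinct vertices carries exactly one directed edge; it is homogeneous if every isomorphism between finite substructures extends to an automorphism. $\mathbf T=(T,E^{\mathbf T})$ is a countable homogeneous tournament, and $\mathbf T^*$ is an expansion of $\mathbf T$ to a countable relational language $L_{\mathbf T^*}\supseteq\{E,<\}$ in which $<$ is interpreted as a linear order $<^*$ on $T$. For a positive integer $n$, $[n]=\{0,\dots,n-1\}$. The structure $\mathbf T[I_n]^*$ has universe $T\times[n]$ and language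 $L_{\mathbf T^*}\cup\{L_0,\dots,L_{n-1}\}$ ($L_i$ new unary symbols), interpreted as follows: $E((x,i),(y,j))$ iff $E^{\mathbf T}(x,y)$; for each $m$-ary $R\in L_{\mathbf T^*}\setminus\{E,<\}$, $R((x_1,i_1),\dots,(x_m,i_m))$ iff $R^{\mathbf T^*}(x_1,\dots,x_m)$; $(x,i)<(y,j)$ iff $x<^*y$, or $x=y$ and $i<j$; and $L_i(x,j)$ iff $j=i$. *)

(* Defs.v *)
From mathcomp Require Import all_boot.
Set Implicit Arguments. Unset Strict Implicit. Unset Printing Implicit Defensive.

Record lang := Lang { sym : Type; arity : sym -> nat }.

Definition interp (L : lang) (A : Type) := forall R : sym L, ('I_(arity R) -> A) -> Prop.

Record finstruc (L : lang) := FinStruc { fcar : finType; frel : interp L fcar }.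
Arguments frel {L} f _ _.
Arguments fcar {L} f.

Definition embedding (L : lang) (A B : Type) (IA : interp L A) (IB : interp L B)
  (f : A -> B) : Prop :=
  injective f /\ forall (R : sym L) (t : 'I_(arity R) -> A), IA R t <-> IB R (f \o t).

Definition Age (L : lang) (F : Type) (IF : interp L F) : finstruc L -> Prop :=
  fun A => exists f : fcar A -> F, embedding (frel A) IF f.

(* S is (the universe of) a substructure of C isomorphic to A,
   i.e. S is in binom(C, A). *)
Definition isCopy (L : lang) (C A : finstruc L) (S : {set fcar C}) : Prop :=
  exists f : fcar A -> fcar C,
    embedding (frel A) (frel C) f /\ S = [set f x | x in [set: fcar A]].

Definition arrows (L : lang) (C B A : finstruc L) (k : nat) : Prop :=
  forall c : {set fcar C} -> 'I_k,
    exists B' : {set fcar C}, isCopy B B' /\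
      exists col : 'I_k, forall A' : {set fcar C}, isCopy A A' -> A' \subset B' -> c A' = col.

Definition ramsey (L : lang) (K : finstruc L -> Prop) : Prop :=
  forall k : nat, 0 < k -> forall A B : finstruc L, K A -> K B ->
    exists C : finstruc L, K C /\ arrows C B A k.

Definition tournament (T : Type) (E : T -> T -> Prop) : Prop :=
  (forall x y, E x y -> ~ E y x) /\ (forall x y, x <> y -> E x y \/ E y x).

(* Every isomorphism between finite substructures extends to an automorphism:
   the finite substructures are images of injections f, g from a finite index
   type, and the isomorphism is g o f^-1. *)
Definition homogeneous_tournament (T : Type) (E : T -> T -> Prop) : Prop :=
  forall (A : finType) (f g : A -> T), injective f -> injective g ->
    (forall x y, E (f x) (f y) <-> E (g x) (g y)) ->
    exists h : T -> T, bijective h /\ (forall x y, E x y <-> E (h x) (h y)) /\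
      (forall a, h (f a) = g a).

Definition strict_linear_order (T : Type) (lt : T -> T -> Prop) : Prop :=
  (forall x, ~ lt x x) /\ (forall x y z, lt x y -> lt y z -> lt x z) /\
  (forall x y, x <> y -> lt x y \/ lt y x).

Inductive tsym (S : Type) := TE | TLt | TR of S.
Arguments TE {S}. Arguments TLt {S}.

Definition tar (S : Type) (ar : S -> nat) (R : tsym S) : nat :=
  match R with TE => 2 | TLt => 2 | TR s => ar s end.

Definition tlang (S : Type) (ar : S -> nat) : lang := Lang (tar ar).

Definition i0 : 'I_2 := @Ordinal 2 0 isT.
Definition i1 : 'I_2 := @Ordinal 2 1 isT.

Definition Tstar (T S : Type) (ar : S -> nat) (E lt : T -> T -> Prop)
  (RT : forall s : S, ('I_(ar s) -> T) -> Prop) : interp (tlang ar) T :=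
  fun R => match R as R0 return ('I_(tar ar R0) -> T) -> Prop with
  | TE => fun t => E (t i0) (t i1)
  | TLt => fun t => lt (t i0) (t i1)
  | TR s => fun t => RT s t
  end.

Inductive nsym (S : Type) (n : nat) := NE | NLt | NR of S | NL of 'I_n.
Arguments NE {S n}. Arguments NLt {S n}.

Definition nar (S : Type) (ar : S -> nat) (n : nat) (R : nsym S n) : nat :=
  match R with NE => 2 | NLt => 2 | NR s => ar s | NL _ => 1 end.

Definition nlang (S : Type) (ar : S -> nat) (n : nat) : lang := Lang (@nar S ar n).

Definition TInstar (T S : Type) (ar : S -> nat) (E lt : T -> T -> Prop)
  (RT : forall s : S, ('I_(ar s) -> T) -> Prop) (n : nat) :
  interp (nlang ar n) (T * 'I_n) :=
  fun R => match R as R0 return ('I_(@nar S ar n R0) -> T * 'I_n) -> Prop with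
  | NE => fun t => E (t i0).1 (t i1).1
  | NLt => fun t => lt (t i0).1 (t i1).1 \/
                    ((t i0).1 = (t i1).1 /\ ((t i0).2 < (t i1).2)%N)
  | NR s => fun t => RT s (fun j => (t j).1)
  | NL i => fun t => (t ord0).2 = i
  end.
Arguments Tstar {T S ar} E lt RT _ _.
Arguments TInstar {T S ar} E lt RT n _ _.

(* Main.v *)
From mathcomp Require Import all_boot.
Require Import Defs.
From Stdlib Require Import ClassicalEpsilon FunctionalExtensionality.

Definition pb (P : Prop) : bool := if excluded_middle_informative P then true else false.
Lemma pbP P : reflect P (pb P).
Proof. rewrite /pb; case: excluded_middle_informative => H; constructor; done. Qed.

Definition pair2 (A : Type) (x y : A) : 'I_2 -> A := fun j => if val j == 0 then x else y.
Arguments pair2 {A}.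

Lemma uniq_emb (T : Type) (lt : T -> T -> Prop) (Z W : finType) (h : W -> T) (g g' : Z -> W) :
  strict_linear_order lt -> injective h -> injective g -> injective g' ->
  (forall r q, lt (h (g r)) (h (g q)) <-> lt (h (g' r)) (h (g' q))) ->
  [set g x | x in [set: Z]] = [set g' x | x in [set: Z]] ->
  forall q, g q = g' q.
Proof.
move=> [irr [tr tot]] hi gi g'i hlt him.
set I := [set g x | x in [set: Z]].
pose rk z := #|[set w in I | pb (lt (h w) (h z))]|.
have rkg : forall (f : Z -> W), injective f -> I = [set f x | x in [set: Z]] ->
   forall q, rk (f q) = #|[set r | pb (lt (h (f r)) (h (f q)))]|.
  move=> f fi fI q; rewrite /rk -(card_imset _ fi); apply: eq_card => w; rewrite !inE fI.
  apply/andP/imsetP => [[/imsetP [x _ ->] Hp] | [x Hx ->]].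
    by exists x => //; rewrite inE.
  by split; [apply: imset_f; rewrite inE | move: Hx; rewrite inE].
have rkinj : forall z z', z \in I -> lt (h z) (h z') -> rk z < rk z'.
  move=> z z' zI lzz; apply: proper_card; apply/properP; split.
    apply/subsetP => w; rewrite !inE => /andP [-> /pbP ?]; apply/pbP; exact: tr lzz.
  exists z; rewrite !inE zI /=; first by apply/pbP.
  by apply/pbP; apply: irr.
move=> q.
have e1 : rk (g q) = rk (g' q).
  rewrite (rkg g gi erefl) (rkg g' g'i him); apply: eq_card => r; rewrite !inE.
  by apply/pbP/pbP; apply hlt.
case: (eqVneq (g q) (g' q)) => // ne.
have hne : h (g q) <> h (g' q) by move/hi => /eqP; rewrite (negbTE ne).
have gI : g q \in I by apply: imset_f.
have g'I : g' q \in I by rewrite /I him; apply: imset_f.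
case: (tot _ _ hne) => H.
  by move: (rkinj _ _ gI H); rewrite e1 ltnn.
by move: (rkinj _ _ g'I H); rewrite e1 ltnn.
Qed.
Set Implicit Arguments. Unset Strict Implicit. Unset Printing Implicit Defensive.

Section Main.
Variables (T : countType) (E : T -> T -> Prop) (S : countType) (ar : S -> nat)
  (lt : T -> T -> Prop) (RT : forall s : S, ('I_(ar s) -> T) -> Prop) (n : nat).

Definition LT := tlang ar.
Definition LN := nlang ar n.

Definition projseq (X : finstruc LN) (fX : fcar X -> T * 'I_n) : seq T :=
  codom (fun x => (fX x).1).

Definition proj_struc (X : finstruc LN) (fX : fcar X -> T * 'I_n) : finstruc LT :=
  @FinStruc LT (seq_sub (projseq fX)) (fun R t => Tstar E lt RT R (fun j => ssval (t j))).

Definition pj (X : finstruc LN) (fX : fcar X -> T * 'I_n) (x : fcar X) : fcar (proj_struc fX) :=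
  SeqSub (codom_f (fun x => (fX x).1) x).

Lemma emb_comp (L : lang) (A B C : Type) (IA : interp L A) (IB : interp L B) (IC : interp L C) f g :
  embedding IA IB f -> embedding IB IC g -> embedding IA IC (g \o f).
Proof.
move=> [fi fr] [gi gr]; split; first exact: inj_comp.
by move=> R t; rewrite fr gr.
Qed.

Lemma lift_emb (X : finstruc LN) (fX : fcar X -> T * 'I_n) (h : fcar (proj_struc fX) -> T) :
  embedding (frel X) (TInstar E lt RT n) fX ->
  embedding (frel (proj_struc fX)) (Tstar E lt RT) h ->
  embedding (frel X) (TInstar E lt RT n) (fun x => (h (pj fX x), (fX x).2)).
Proof.
move=> [fXi fXr] [hi hr]; split.
  move=> x y [] /hi /(congr1 (@ssval _ _)) /= e1 e2; apply: fXi.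
  by rewrite [fX x]surjective_pairing [fX y]surjective_pairing e1 e2.
have peq : forall x y, (fX x).1 = (fX y).1 <-> h (pj fX x) = h (pj fX y).
  move=> x y; split => [e|/hi /(congr1 (@ssval _ _)) //].
  by congr h; apply: val_inj; rewrite /= e.
case=> [t|t|s t|i t] /=; rewrite fXr /=.
- exact: (hr TE (fun j => pj fX (t j))).
- have := hr TLt (fun j => pj fX (t j)); rewrite /= => ->.
  by rewrite peq.
- exact: (hr (TR s) (fun j => pj fX (t j))).
- done.
Qed.


Definition liftC (C0 : finstruc LT) (fC0 : fcar C0 -> T) : finstruc LN :=
  @FinStruc LN (fcar C0 * 'I_n)%type
    (fun R t => TInstar E lt RT n R (fun j => (fC0 (t j).1, (t j).2))).

Definition liftf (X : finstruc LN) (fX : fcar X -> T * 'I_n) (C0 : finstruc LT)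
  (g : fcar (proj_struc fX) -> fcar C0) : fcar X -> fcar C0 * 'I_n :=
  fun x => (g (pj fX x), (fX x).2).

Lemma liftC_age (C0 : finstruc LT) (fC0 : fcar C0 -> T) :
  embedding (frel C0) (Tstar E lt RT) fC0 -> Age (TInstar E lt RT n) (liftC fC0).
Proof.
move=> [fi fr]; exists (fun p : fcar C0 * 'I_n => (fC0 p.1, p.2)); split => //.
by move=> [a i] [b j] [] /fi -> ->.
Qed.

Lemma proj_age (X : finstruc LN) (fX : fcar X -> T * 'I_n) :
  Age (Tstar E lt RT) (proj_struc fX).
Proof. by exists (@ssval _ _); split => //; exact: val_inj. Qed.

Lemma liftf_emb (X : finstruc LN) (fX : fcar X -> T * 'I_n) (C0 : finstruc LT)
  (fC0 : fcar C0 -> T) (g : fcar (proj_struc fX) -> fcar C0) :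
  embedding (frel X) (TInstar E lt RT n) fX ->
  embedding (frel C0) (Tstar E lt RT) fC0 ->
  embedding (frel (proj_struc fX)) (frel C0) g ->
  embedding (frel X) (frel (liftC fC0)) (liftf g).
Proof.
move=> fXe fC0e ge.
have [i r] := lift_emb fXe (emb_comp ge fC0e).
split; last exact: r.
move=> x y [] e1 e2; apply: i; rewrite /= e1 e2 //.
Qed.

Lemma emb_lt (Y : finstruc LT) (C0 : finstruc LT) (fC0 : fcar C0 -> T) (g : fcar Y -> fcar C0) :
  embedding (frel Y) (frel C0) g -> embedding (frel C0) (Tstar E lt RT) fC0 ->
  forall r q, lt (fC0 (g r)) (fC0 (g q)) <-> frel Y TLt (pair2 r q).
Proof.
move=> ge fC0e r q; have [_ h] := emb_comp ge fC0e.
exact: (iff_sym (h TLt (pair2 r q))).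
Qed.

Lemma proj_copy (X : finstruc LN) (fX : fcar X -> T * 'I_n) (C0 : finstruc LT)
  (fC0 : fcar C0 -> T) (e : fcar X -> fcar C0 * 'I_n) :
  tournament E -> strict_linear_order lt ->
  embedding (frel X) (TInstar E lt RT n) fX ->
  embedding (frel C0) (Tstar E lt RT) fC0 ->
  embedding (frel X) (frel (liftC fC0)) e ->
  exists g : fcar (proj_struc fX) -> fcar C0,
    embedding (frel (proj_struc fX)) (frel C0) g /\ forall x, liftf g x = e x.
Proof.
move=> [tas ttot] [irr [tr tot]] [fXi fXr] [fC0i fC0r] [ei er].
have Eirr : forall a0, ~ E a0 a0.
  by move=> a1 H; exact: (tas a1 a1 H H).
have Er : forall x y, E (fX x).1 (fX y).1 <-> E (fC0 (e x).1) (fC0 (e y).1) :=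
  fun x y => iff_trans (iff_sym (fXr NE (pair2 x y))) (er NE (pair2 x y)).
have W : forall x y, (fX x).1 = (fX y).1 <-> (e x).1 = (e y).1.
  move=> x y; split => eq.
    case: (eqVneq (e x).1 (e y).1) => // ne.
    have fne : fC0 (e x).1 <> fC0 (e y).1 by move/fC0i => /eqP; rewrite (negbTE ne).
    by case: (ttot _ _ fne) => H; [move/Er: H | move/Er: H]; rewrite eq => /Eirr.
  case: (eqVneq (fX x).1 (fX y).1) => // /eqP ne.
  by case: (ttot _ _ ne) => H; [move/Er: H | move/Er: H]; rewrite eq => /Eirr.
have W' : forall x y, (fX x).1 = (fX y).1 <-> fC0 (e x).1 = fC0 (e y).1.
  move=> x y; rewrite W; split => [->//|]; exact: fC0i.
have e2 : forall x, (e x).2 = (fX x).2.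
  move=> x; have := er (@NL S n (fX x).2) (fun _ => x); rewrite /=.
  by move=> h; apply: (proj1 h); apply: (proj2 (fXr _ _)).
pose g (q : fcar (proj_struc fX)) := (e (iinv (ssvalP q))).1.
have gi : forall q, (fX (iinv (ssvalP q))).1 = ssval q := fun q => @f_iinv _ _ (fun x => (fX x).1) _ _ (ssvalP q).
have gpj : forall x, g (pj fX x) = (e x).1.
  by move=> x; apply/W; rewrite gi.
exists g; split; last first.
  by move=> x; rewrite /liftf gpj -e2 -surjective_pairing.
split.
  move=> q q' /W; rewrite !gi => h; exact: val_inj.
move=> R t.
pose xs j := iinv (ssvalP (t j)).
have sv : (fun j => ssval (t j)) = (fun j => (fX (xs j)).1).
  by apply: functional_extensionality => j; rewrite /xs gi.
rewrite /= sv fC0r.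
have -> : (fC0 \o (g \o t)) = (fun j => fC0 (e (xs j)).1) by [].
clearbody xs; clear sv.
case: R t xs => [t xs|t xs|s t xs] /=.
- exact: Er.
- have Lr := iff_trans (iff_sym (fXr NLt (pair2 (xs i0) (xs i1)))) (er NLt (pair2 (xs i0) (xs i1))).
  simpl in Lr.
  split => H.
    case: (proj1 Lr (or_introl H)) => // [[/W' eq _]].
    by rewrite eq in H; case: (irr _ H).
  case: (proj2 Lr (or_introl H)) => // [[/W' eq _]].
  by rewrite -eq in H; case: (irr _ H).
- exact: (iff_trans (iff_sym (fXr (@NR S n s) xs)) (er (@NR S n s) xs)).
Qed.

End Main.

Theorem theorem4p2 (T : countType) (E : T -> T -> Prop)
  (S : countType) (ar : S -> nat) (lt : T -> T -> Prop)
  (RT : forall s : S, ('I_(ar s) -> T) -> Prop) :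
  tournament E -> homogeneous_tournament E -> strict_linear_order lt ->
  ramsey (Age (Tstar E lt RT)) ->
  forall n : nat, 0 < n -> ramsey (Age (TInstar E lt RT n)).
Proof.
move=> tourn _ slo HR n _ k k0 A B [fA fAe] [fB fBe].
have [C0 [[fC0 fC0e] arr]] := HR k k0 _ _ (proj_age E lt RT fA) (proj_age E lt RT fB).
exists (liftC E lt RT n fC0); split; first exact: liftC_age.
move=> c.
pose c0 (S0 : {set fcar C0}) : 'I_k :=
  c (match excluded_middle_informative (isCopy (proj_struc E lt RT fA) S0) with
     | left H => [set liftf (proj1_sig (constructive_indefinite_description _ H)) x | x in [set: fcar A]]
     | right _ => set0 end).
have [B0' [[gB [gBe B0'eq]] [col Hcol]]] := arr c0.
exists [set liftf gB x | x in [set: fcar B]]; split.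
  by exists (liftf gB); split => //; exact: liftf_emb.
exists col => A' [e [ee A'eq]] sub.
have [g [ge gl]] := proj_copy tourn slo fAe fC0e ee.
set S0 := [set g x | x in [set: _]].
have Sc : isCopy (proj_struc E lt RT fA) S0 by exists g.
have SB : S0 \subset B0'.
  apply/subsetP => _ /imsetP [q _ ->].
  have -> : q = pj E lt RT fA (iinv (ssvalP q)).
    apply: val_inj => /=; exact: (esym (@f_iinv _ _ (fun x => (fA x).1) _ _ (ssvalP q))).
  have : e (iinv (ssvalP q)) \in A' by rewrite A'eq; apply: imset_f.
  move/(subsetP sub) => /imsetP [b _ eb].
  rewrite -[g _]/((liftf g _).1) gl eb B0'eq /=; apply: imset_f; done.
have := Hcol S0 Sc SB; rewrite /c0.
case: excluded_middle_informative => [H|//].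
case: (constructive_indefinite_description _ H) => g' [g'e g'im] /=.
have gg : forall q, g' q = g q.
  have [_ lt1] := slo.
  apply: (@uniq_emb _ lt _ _ fC0 g' g slo (proj1 fC0e) (proj1 g'e) (proj1 ge)).
    by move=> r q; rewrite (emb_lt g'e fC0e) (emb_lt ge fC0e).
  by rewrite -g'im.
have -> : [set liftf g' x | x in [set: fcar A]] = A'.
  rewrite A'eq; apply: eq_imset => x; rewrite -gl /liftf gg //.
done.
Qed.
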